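(* Let $k\ge2$ and let $G,H$ be connected graphs. Let $w\in V(G)$ and $w'\in V(H)$ be vertices such that $G-\{w\}$ is connected and $H-\{w'\}$ is disconnected. Then $\chi^k_G(w)\ne\chi^k_H(w')$.
   Context: Graphs are finite, simple, undirected (possibly colored; uncolored graphs are monochromatic). For $k\ge2$, the $k$-dimensional Weisfeiler–Leman algorithm computes a coloring of $V(G)^k$: the initial color of a tuple consists of its input color and the isomorphism type of the ordered induced subgraph on its entries; in each round the new color of $\bar v$ is the pair of its old color and the multiset, over $w\in V(G)$, of the $k$-tuples whose $i$-th component is the old color of $\bar v$ with its $i$-th entry replaced by $w$; the stable coloring is $\chi^k_G$, with canonical colors comparable across graphs. For a vertex $w$, $\chi^k_G(w):=\chi^k_G(w,\dots,w)$. *)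

(* Defs.v *)
From mathcomp Require Import all_boot.
Set Implicit Arguments. Unset Strict Implicit. Unset Printing Implicit Defensive.

(* A graph is given by a finite vertex type T, an edge relation e (assumed
   symmetric and irreflexive in the theorem) and a vertex colouring
   c : T -> nat (uncoloured graphs = constant colouring).
   Colours of the k-WL algorithm are canonical values of type
   GenTree.tree nat, hence comparable across graphs. *)

Notation wlcolor := (GenTree.tree nat).

(* canonical representation of a multiset of colours: sort by the
   (injective) pickle encoding *)
Definition mset (s : seq wlcolor) : seq wlcolor :=
  sort (fun a b : wlcolor => pickle a <= pickle b) s.

Section WL.
Variables (k : nat) (T : finType) (e : rel T) (c : T -> nat).

Definition upd (v : 'I_k -> T) (i : 'I_k) (w : T) : 'I_k -> T :=
  fun j => if j == i then w else v j.

(* initial colour: input colours of the entries, and the isomorphism type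
   of the ordered induced subgraph (equality and adjacency pattern) *)
Definition wl_init (v : 'I_k -> T) : wlcolor :=
  GenTree.Node 0
    [:: GenTree.Node 1 [seq GenTree.Leaf (c (v i)) | i <- enum 'I_k];
        GenTree.Node 2 [seq GenTree.Leaf (nat_of_bool (v i == v j))
                         | i <- enum 'I_k, j <- enum 'I_k];
        GenTree.Node 3 [seq GenTree.Leaf (nat_of_bool (e (v i) (v j)))
                         | i <- enum 'I_k, j <- enum 'I_k]].

Fixpoint wl_round (r : nat) (v : 'I_k -> T) : wlcolor :=
  match r with
  | 0 => wl_init v
  | r'.+1 =>
      GenTree.Node 4
        [:: wl_round r' v;
            GenTree.Node 5
              (mset [seq GenTree.Node 6 [seq wl_round r' (upd v i w) | i <- enum 'I_k]
                    | w <- enum T])]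
  end.

(* the stable colour chi^k_G(v): the (canonical) limit of the refinement,
   represented by the whole sequence of round colours; two tuples (possibly
   in different graphs) get the same stable colour iff they agree in every
   round. *)
Definition wl_stable (v : 'I_k -> T) : nat -> wlcolor := fun r => wl_round r v.

Definition wl_vertex (w : T) : nat -> wlcolor := wl_stable (fun _ => w).

End WL.

Definition simple_graph (T : finType) (e : rel T) : Prop :=
  symmetric e /\ irreflexive e.

Definition connected_graph (T : finType) (e : rel T) : Prop :=
  forall x y : T, connect e x y.

Definition connected_minus (T : finType) (e : rel T) (w : T) : Prop :=
  forall x y : T, x != w -> y != w ->
    connect (fun a b => [&& e a b, a != w & b != w]) x y.

(* Main.v *)
Require Import Defs.
From mathcomp Require Import all_boot.
From Stdlib Require Import Classical_Prop.
Set Implicit Arguments. Unset Strict Implicit. Unset Printing Implicit Defensive.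

Section Walks.
Variables (T : finType) (e : rel T).

Fixpoint W n (x y : T) : nat :=
  if n is n'.+1 then \sum_(z : T) e x z * W n' z y else (x == y).
Fixpoint Fp (w : T) n (x : T) : nat :=
  if n is n'.+1 then (x != w) * \sum_(z : T) e x z * Fp w n' z else (x == w).
Fixpoint AW (w : T) n (x y : T) : nat :=
  if n is n'.+1 then (x != w) * \sum_(z : T) e x z * AW w n' z y
  else ((x == y) && (x != w)).

Lemma decomp w n x y :
  W n x y = AW w n x y + \sum_(i < n.+1) Fp w i x * W (n - i) w y.
Proof.
elim: n x => [|n IH] x /=.
  rewrite big_ord1 /=.
  case: (eqVneq x w) => [->|hxw]; first by case: (w == y).
  by rewrite andbT mul0n addn0.
case: (eqVneq x w) => [->|hxw].
  rewrite mul0n add0n big_ord_recl /= eqxx mul1n.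
  rewrite [X in _ + X]big1 ?addn0 //.
rewrite /= mul1n big_ord_recl /= (negbTE hxw) mul0n add0n.
rewrite (eq_bigr (fun z => e x z * AW w n z y +
   \sum_(i < n.+1) e x z * (Fp w i z * W (n - i) w y))); last first.
  by move=> z _; rewrite IH mulnDr big_distrr.
rewrite big_split /=; congr (_ + _).
rewrite exchange_big /=; apply: eq_bigr => i _.
rewrite /bump leq0n add1n subSS add0n mul1n big_distrl /=; apply: eq_bigr => z _.
by rewrite mulnA.
Qed.

Lemma W_last n x y : W n.+1 x y = \sum_(z : T) W n x z * e z y.
Proof.
elim: n x => [|n IH] x.
  rewrite /= (bigD1 y) //= eqxx muln1 big1 ?addn0.
    rewrite (bigD1 x) //= eqxx mul1n big1 ?addn0 //.
    by move=> z /negbTE; rewrite eq_sym => ->.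
  by move=> z /negbTE ->; rewrite muln0.
have -> : W n.+2 x y = \sum_(z : T) e x z * W n.+1 z y by [].
rewrite (eq_bigr (fun z => \sum_(u : T) e x z * (W n z u * e u y))); last first.
  by move=> z _; rewrite IH big_distrr.
rewrite exchange_big /=; apply: eq_bigr => u _.
by rewrite big_distrl /=; apply: eq_bigr => z _; rewrite mulnA.
Qed.

Lemma W_sym (se : symmetric e) n x y : W n x y = W n y x.
Proof.
elim: n x y => [|n IH] x y; first by rewrite /= eq_sym.
rewrite W_last /=; apply: eq_bigr => z _.
by rewrite IH se mulnC.
Qed.

Lemma AW_neq w n x y : 0 < AW w n x y -> x != w.
Proof.
by case: n => [|n] /=; case: (x != w); rewrite ?andbF.
Qed.

Definition Rw (w : T) := fun a b => [&& e a b, a != w & b != w].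

Lemma AW_connect w n x y : 0 < AW w n x y -> connect (Rw w) x y.
Proof.
elim: n x => [|n IH] x /=.
  by case: (eqVneq x y) => [->|]; rewrite ?connect0.
case: (eqVneq x w) => [_|hxw]; first by rewrite mul0n.
rewrite mul1n => hs.
case: (pickP (fun z => 0 < e x z * AW w n z y)) => [z hz|h]; last first.
  move: hs; rewrite big1 // => z _.
  by apply/eqP; rewrite -leqn0 leqNgt h.
move: hz; rewrite muln_gt0 lt0b => /andP [hxz hz].
apply: connect_trans (IH _ hz).
by apply: connect1; rewrite /Rw hxz hxw (AW_neq hz).
Qed.

Lemma connect_AW w x y : x != w -> connect (Rw w) x y -> exists n, 0 < AW w n x y.
Proof.
move=> hxw /connectP [p hp ->] {y}.
elim: p x hxw hp => [|z p IH] x hxw /=.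
  by move=> _; exists 0; rewrite /= eqxx hxw.
case/andP => /and3P [hxz _ hzw] hp.
have [n hn] := IH z hzw hp.
exists n.+1; rewrite /= hxw mul1n (bigD1 z) //= hxz mul1n.
exact: leq_trans hn (leq_addr _ _).
Qed.

End Walks.

Lemma map_eq_in (A : eqType) (B : Type) (f g : A -> B) (s : seq A) :
  map f s = map g s -> forall x, x \in s -> f x = g x.
Proof.
elim: s => //= a s IH [ha hs] x; rewrite in_cons => /orP [/eqP -> //|].
exact: IH.
Qed.

Lemma allpairs_eq_in (A : eqType) (B : eqType) (f g : A -> A -> B) (s t : seq A) :
  [seq f i j | i <- s, j <- t] = [seq g i j | i <- s, j <- t] ->
  forall i j, i \in s -> j \in t -> f i j = g i j.
Proof.
elim: s => // a s IH; rewrite !allpairs_cons => /eqP.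
rewrite eqseq_cat ?size_map // => /andP [/eqP h1 /eqP h2] i j.
rewrite in_cons => /orP [/eqP -> |hi] hj; first exact: map_eq_in h1 _ hj.
exact: IH h2 _ _ hi hj.
Qed.

Lemma sum_transport (A B : eqType) (C : eqType) (s : seq A) (s' : seq B)
  (c : A -> C) (c' : B -> C) (g : A -> nat) (g' : B -> nat) :
  perm_eq (map c s) (map c' s') ->
  (forall x x', c x = c' x' -> g x = g' x') ->
  \sum_(x <- s) g x = \sum_(x <- s') g' x.
Proof.
move=> + hg; elim: s s' => [|x s IH] s' hp.
  case: s' hp => [|y s' hp]; first by rewrite !big_nil.
  by have := perm_size hp.

have : c x \in map c' s' by rewrite -(perm_mem hp) mem_head.
case/mapP => x' hx' hcx.
have hperm := perm_to_rem hx'.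
rewrite (perm_big _ hperm) !big_cons (hg _ _ hcx); congr (_ + _).
apply: IH.
have := perm_trans hp (perm_map c' hperm).
by rewrite /= -hcx perm_cons.
Qed.

Lemma pigeon (X : finType) (P : nat -> pred X) :
  (forall r x, P r.+1 x -> P r x) -> (forall r, exists x, P r x) ->
  exists x, forall r, P r x.
Proof.
move=> mono ne; apply: NNPP => hn.
have H' : forall x, exists r, ~~ P r x.
  move=> x; apply: NNPP => h; apply: hn; exists x => r; apply: NNPP => hr.
  by apply: h; exists r; apply/negP.
pose rf x := ex_minn (H' x).
have [x hx] := ne (\max_(y : X) rf y).
have le : rf x <= \max_(y : X) rf y by exact: leq_bigmax.
have monole : forall r1 r2, r1 <= r2 -> P r2 x -> P r1 x.
  move=> r1 r2 /subnK <-; elim: (r2 - r1) => //= d IHd.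
  by rewrite addSn => /mono.
move: (monole _ _ le hx); rewrite /rf; case: ex_minnP => r hr _.
by rewrite (negbTE hr).
Qed.

Section WLfacts.
Variables (k : nat) (TG TH : finType) (eG : rel TG) (eH : rel TH)
  (cG : TG -> nat) (cH : TH -> nat).

Notation RG r v := (@wl_round k _ eG cG r v).
Notation RH r v := (@wl_round k _ eH cH r v).

Definition colG r (v : 'I_k -> TG) (z : TG) : wlcolor :=
  GenTree.Node 6 [seq RG r (upd v i z) | i <- enum 'I_k].
Definition colH r (v : 'I_k -> TH) (z : TH) : wlcolor :=
  GenTree.Node 6 [seq RH r (upd v i z) | i <- enum 'I_k].

Lemma atomic0 v v' : RG 0 v = RH 0 v' ->
  forall i j, (v i == v j) = (v' i == v' j) /\ eG (v i) (v j) = eH (v' i) (v' j).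
Proof.
rewrite /= /wl_init => -[] _ h2 h3 i j.
have hi : i \in enum 'I_k by rewrite mem_enum.
have hj : j \in enum 'I_k by rewrite mem_enum.
have := allpairs_eq_in h2 hi hj; have := allpairs_eq_in h3 hi hj.
move=> [] + [].
by case: (eG _ _); case: (eH _ _); case: (v i == v j); case: (v' i == v' j).
Qed.

Lemma step r v v' : RG r.+1 v = RH r.+1 v' ->
  RG r v = RH r v' /\ perm_eq (map (colG r v) (enum TG)) (map (colH r v') (enum TH)).
Proof.
rewrite /= /mset => -[h1 h2]; split => //.
set leT := (fun a b : wlcolor => pickle a <= pickle b).
have P1 := perm_sort leT (map (colG r v) (enum TG)).
have P2 := perm_sort leT (map (colH r v') (enum TH)).
rewrite /colG /colH in P1 P2.
rewrite h2 in P1.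
by rewrite /colG /colH -P1 P2.
Qed.

Lemma col_eq r v v' z z' : colG r v z = colH r v' z' ->
  forall i, RG r (upd v i z) = RH r (upd v' i z').
Proof.
move=> [h] i.
by apply: (map_eq_in (f := fun i => RG r (upd v i z)) (g := fun i => RH r (upd v' i z')) h); rewrite mem_enum.
Qed.

Lemma col_ex r v v' : perm_eq (map (colG r v) (enum TG)) (map (colH r v') (enum TH)) ->
  forall z', exists z, colG r v z = colH r v' z'.
Proof.
move=> hp z'.
have : colH r v' z' \in map (colH r v') (enum TH) by rewrite map_f // mem_enum.
by rewrite -(perm_mem hp) => /mapP [z _ ->]; exists z.
Qed.

Lemma mono_le r1 r2 v v' : r1 <= r2 -> RG r2 v = RH r2 v' -> RG r1 v = RH r1 v'.
Proof.
move=> /subnK <-; elim: (r2 - r1) => //= d IHd.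
by move=> /step [] /IHd.
Qed.

Lemma atomic r v v' : RG r v = RH r v' ->
  forall i j, (v i == v j) = (v' i == v' j) /\ eG (v i) (v j) = eH (v' i) (v' j).
Proof. by move=> h; apply: atomic0; apply: mono_le h. Qed.

Variables (i0 i1 : 'I_k) (hi : i1 != i0).

Lemma upd_i0 (T : finType) (v : 'I_k -> T) z : upd v i0 z i0 = z /\ upd v i0 z i1 = v i1.
Proof. by rewrite /upd eqxx (negbTE hi). Qed.
Lemma upd_i1 (T : finType) (v : 'I_k -> T) z : upd v i1 z i1 = z /\ upd v i1 z i0 = v i0.
Proof. by rewrite /upd eqxx eq_sym (negbTE hi). Qed.

Lemma Winv n v v' : RG n v = RH n v' -> W eG n (v i0) (v i1) = W eH n (v' i0) (v' i1).
Proof.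
elim: n v v' => [|n IH] v v' h.
  by have [/= -> _] := atomic0 h i0 i1.
have [_ hp] := step h.
rewrite /= -!big_enum /=.
apply: (sum_transport hp) => z z' hc.
have h0 := col_eq hc i0; have h1 := col_eq hc i1.
have := IH _ _ h0; have [-> ->] := upd_i0 v z; have [-> ->] := upd_i0 v' z' => ->.
have [_ ] := atomic h1 i0 i1.
by have [-> ->] := upd_i1 v z; have [-> ->] := upd_i1 v' z' => ->.
Qed.

Lemma Finv n v v' : RG n v = RH n v' ->
  Fp eG (v i1) n (v i0) = Fp eH (v' i1) n (v' i0).
Proof.
elim: n v v' => [|n IH] v v' h.
  by have [/= -> _] := atomic0 h i0 i1.
have [_ hp] := step h.
rewrite /=; have [-> _] := atomic h i0 i1; congr (_ * _).
rewrite -!big_enum /=.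
apply: (sum_transport hp) => z z' hc.
have h0 := col_eq hc i0; have h1 := col_eq hc i1.
have := IH _ _ h0; have [-> ->] := upd_i0 v z; have [-> ->] := upd_i0 v' z' => ->.
have [_ ] := atomic h1 i0 i1.
by have [-> ->] := upd_i1 v z; have [-> ->] := upd_i1 v' z' => ->.
Qed.

End WLfacts.

Theorem corollary7 (k : nat) (hk : 2 <= k)
  (TG : finType) (eG : rel TG) (cG : TG -> nat)
  (TH : finType) (eH : rel TH) (cH : TH -> nat)
  (w : TG) (w' : TH) :
  simple_graph eG -> simple_graph eH ->
  connected_graph eG -> connected_graph eH ->
  connected_minus eG w -> ~ connected_minus eH w' ->
  wl_vertex k eG cG w <> wl_vertex k eH cH w'.
Proof.
move=> [seG _] [seH _] _ _ cmG ncmH Heq.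
have Hr r : @wl_round k _ eG cG r (fun _ => w) = @wl_round k _ eH cH r (fun _ => w') :=
  congr1 (fun f => f r) Heq.
have [a' [b' [ha' [hb' nc]]]] :
    exists a' b', a' != w' /\ b' != w' /\ ~ connect (Rw eH w') a' b'.
  apply: NNPP => hn; apply: ncmH => x y hx hy; apply: NNPP => hc.
  by apply: hn; exists x, y.
pose i0 : 'I_k := Ordinal (ltnW hk).
pose i1 : 'I_k := Ordinal hk.
have hi : i1 != i0 by [].
pose u : 'I_k -> TG := fun _ => w.
pose u' : 'I_k -> TH := fun _ => w'.
pose P r (p : TG * TG) :=
  [&& @wl_round k _ eG cG r (upd u i0 p.1) == @wl_round k _ eH cH r (upd u' i0 a'),
      @wl_round k _ eG cG r (upd (upd u i0 p.1) i0 p.2) ==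
        @wl_round k _ eH cH r (upd (upd u' i0 a') i0 b') &
      @wl_round k _ eG cG r (upd (upd u i0 p.1) i1 p.2) ==
        @wl_round k _ eH cH r (upd (upd u' i0 a') i1 b')].
have [[a b] hab] : exists p, forall r, P r p.
  apply: pigeon.
    move=> r p /and3P [/eqP h1 /eqP h2 /eqP h3].
    by rewrite /P (mono_le (leqnSn r) h1) (mono_le (leqnSn r) h2) (mono_le (leqnSn r) h3) !eqxx.
  move=> r.
  have [_ hp] := step (Hr r.+2).
  have [a ha] := col_ex hp a'.
  have h1 := col_eq ha i0.
  have [_ hp2] := step h1.
  have [b hb] := col_ex hp2 b'.
  exists (a, b); rewrite /P /= (col_eq hb i0) (col_eq hb i1).
  by have [-> _] := step h1; rewrite !eqxx.
have E1 r : @wl_round k _ eG cG r (upd u i0 a) = @wl_round k _ eH cH r (upd u' i0 a').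
  by have /and3P [/eqP -> _ _] := hab r.
have E2 r : @wl_round k _ eG cG r (upd (upd u i0 a) i0 b) =
    @wl_round k _ eH cH r (upd (upd u' i0 a') i0 b').
  by have /and3P [_ /eqP -> _] := hab r.
have E3 r : @wl_round k _ eG cG r (upd (upd u i0 a) i1 b) =
    @wl_round k _ eH cH r (upd (upd u' i0 a') i1 b').
  by have /and3P [_ _ /eqP ->] := hab r.
have haw : a != w.
  have [h _] := atomic (E1 0) i0 i1.
  by move: h; rewrite /upd /= (negbTE ha') => /negbT.
have hbw : b != w.
  have [h _] := atomic (E2 0) i0 i1.
  by move: h; rewrite /upd /= (negbTE hb') => /negbT.
have [n hn] := connect_AW haw (cmG a b haw hbw).
apply: nc; apply: (@AW_connect _ _ w' n).
have dG := decomp eG w n a b; have dH := decomp eH w' n a' b'.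
have hW : W eG n a b = W eH n a' b' by have := Winv hi (E3 n).
have hS : \sum_(i < n.+1) Fp eG w i a * W eG (n - i) w b =
          \sum_(i < n.+1) Fp eH w' i a' * W eH (n - i) w' b'.
  apply: eq_bigr => i _.
  have -> : Fp eG w i a = Fp eH w' i a' by have := Finv hi (E1 i).
  rewrite (W_sym seG) (W_sym seH).
  by have := Winv hi (E2 (n - i)); rewrite /upd !eqxx (negbTE hi) => ->.
move: hn; rewrite -(leq_add2r (\sum_(i < n.+1) Fp eG w i a * W eG (n - i) w b)).
by rewrite -dG hS hW dH leq_add2r.
Qed.
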